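(* Assume the noise-free case $M=I_n$, $N=0$ (so $Q=I_n$, $R(\mathcal D)=X_+-BU_-$ and $\Sigma(\mathcal D)=\{A\in\mathbb{R}^{n\times n}: X_+-BU_-=AX_-\}$), and assume $\Sigma(\mathcal D)\neq\varnothing$. Let $\mathcal F$ be the set of all $v\in\mathbb{R}^T$ such that $v\in\big(\mathcal J^*(\mathcal D)^\perp\cap\ker(CX_-)\big)\setminus\{0\}$ and $X_+v\notin X_+\mathcal J^*(\mathcal D)$. For $\lambda\in\mathbb{C}$ and $v\in\mathcal F$, define the perturbation $\Delta\mathcal D(\lambda,v):=(\Delta_{X_-},\Delta_{X_+},\Delta_{U_-},\Delta_{Y_-})$ with $\Delta_{X_-}=0$, $\Delta_{U_-}=0$, $\Delta_{Y_-}=0$ and $$\Delta_{X_+}:=(\lambda X_--X_++BU_-)v\,\zeta^\mathsf{T},\qquad \zeta:=\frac{\operatorname{proj}_{\mathcal S_+}(v)}{\|\operatorname{proj}_{\mathcal S_+}(v)\|_2^2},$$ so that $\|\Delta\mathcal D(\lambda,v)\|_{\mathrm F}^2=\|\Delta_{X_+}\|_{\mathrm F}^2=\|(\lambda X_--X_++BU_-)v\|_2^2/\|\operatorname{proj}_{\mathcal S_+}(v)\|_2^2$. Then $$\inf_{\lambda\in\mathbb{C},\,v\in\mathcal F}\|\Delta\mathcal D(\lambda,v)\|_{\mathrm F}\ \ge\ d_{\mathrm{UNOBS}}(\Sigma(\mathcal D))\,\sigma_{\min}(X_-).$$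
   Context: Setting. Let $n,m,p,T$ be positive integers, $B\in\mathbb{R}^{n\times m}$, $C\in\mathbb{R}^{p\times n}$, $D\in\mathbb{R}^{p\times m}$, and let $\mathcal D=(X_-,X_+,U_-,Y_-)$ be data with $X_-,X_+\in\mathbb{R}^{n\times T}$, $U_-\in\mathbb{R}^{m\times T}$, $Y_-\in\mathbb{R}^{p\times T}$. With $M=I_n$, $N=0$: $P(\mathcal D)=X_-$, $Q=I_n$, $R(\mathcal D)=X_+-BU_-$. The maximum weakly unobservable coefficient space $\mathcal J^*(\mathcal D)$ is the largest subspace $\mathcal J\subseteq\mathbb{R}^T$ satisfying $$\begin{bmatrix}R(\mathcal D)\\ CP(\mathcal D)\end{bmatrix}\mathcal J\subseteq \big(QP(\mathcal D)\mathcal J\big)\times\{0\}+\operatorname{im}\begin{bmatrix}QB\\ D\end{bmatrix}.$$ $\mathcal S_+:=\mathcal J^*(\mathcal D)^\perp\cap\operatorname{im}(X_+^\mathsf{T})$, and $\operatorname{proj}_{\mathcal S_+}$ is orthogonal projection onto it. For $A\in\mathbb{R}^{n\times n}$, $d_{\mathrm{UNOBS}}(A):=\inf_{\lambda\in\mathbb{C}}\sigma_{\min}\!\left(\begin{bmatrix}\lambda I_n-A\\ C\end{bmatrix}\right)$, where $\sigma_{\min}$ of this $(n+p)\times n$ complex matrix is its smallest ($n$-th) singular value, and $d_{\mathrm{UNOBS}}(\Sigma(\mathcal D)):=\inf_{A\in\Sigma(\mathcal D)}d_{\mathrm{UNOBS}}(A)$. $\sigma_{\min}(X_-)$ denotes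 the smallest of the $\min(n,T)$ singular values of $X_-$. The infimum over an empty set is $+\infty$. *)

(* Defs.v *)
From HB Require Import structures.
From mathcomp Require Import all_boot all_order all_algebra.
From mathcomp Require Import all_classical all_reals ereal.
From mathcomp.real_closed Require Import complex.

Set Implicit Arguments.
Unset Strict Implicit.
Unset Printing Implicit Defensive.

Import Order.TTheory GRing.Theory Num.Theory.
Local Open Scope ring_scope.
Local Open Scope complex_scope.
Local Open Scope classical_set_scope.

Section Defs.
Variable R : realType.
Local Notation C := R[i].

Definition toC {k l : nat} (M : 'M[R]_(k, l)) : 'M[C]_(k, l) :=
  map_mx (fun x : R => x%:C) M.

Definition adjmx {k l : nat} (M : 'M[C]_(k, l)) : 'M[C]_(l, k) :=
  map_mx (@conjc R) M^T.

Definition sqmod (z : C) : R := let: a +i* b := z in a ^+ 2 + b ^+ 2.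

Definition fro2 {k l : nat} (M : 'M[C]_(k, l)) : R :=
  \sum_(i < k) \sum_(j < l) sqmod (M i j).

Definition nrm2 {k : nat} (v : 'rV[R]_k) : R := \sum_(j < k) v 0 j ^+ 2.

(* smallest eigenvalue of a (Hermitian, hence real-spectrum) complex matrix *)
Definition min_eig {k : nat} (G : 'M[C]_k) : R :=
  inf [set x : R | eigenvalue G x%:C].

(* smallest of the min(k,l) singular values of M : 'M_(k,l); the singular
   values are the square roots of the eigenvalues of M^* M (if l <= k) or of
   M M^* (if k < l). *)
Definition sigma_min {k l : nat} (M : 'M[C]_(k, l)) : R :=
  if (l <= k)%N then Num.sqrt (min_eig (adjmx M *m M))
  else Num.sqrt (min_eig (M *m adjmx M)).

(* orthogonal complement (in R^T, vectors as rows) of the row space of J *)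
Definition perp {T : nat} (J : 'M[R]_T) : 'M[R]_T := kermx J^T.

(* matrix of the orthogonal projection (acting on rows by right product)
   onto the row space of S *)
Definition proj_mx {T k : nat} (S : 'M[R]_(k, T)) : 'M[R]_T :=
  let Bs := row_base S in Bs^T *m invmx (Bs *m Bs^T) *m Bs.

Definition proj {T k : nat} (S : 'M[R]_(k, T)) (v : 'rV[R]_T) : 'rV[R]_T :=
  v *m proj_mx S.

Section Data.
Variables (n m p T : nat).
Variables (B : 'M[R]_(n, m)) (Cm : 'M[R]_(p, n)) (D : 'M[R]_(p, m)).
Variables (Xm Xp : 'M[R]_(n, T)) (Um : 'M[R]_(m, T)) (Ym : 'M[R]_(p, T)).

(* noise-free case M = I_n, N = 0 *)
Definition Pdat : 'M[R]_(n, T) := Xm.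
Definition Qdat : 'M[R]_n := 1%:M.
Definition Rdat : 'M[R]_(n, T) := Xp - B *m Um.

(* J (a subspace of R^T given as a row space) is a weakly unobservable
   coefficient space:  [R; C P] J <= (Q P J) x {0} + im [Q B; D]   *)
Definition weakly_unobs_coeff (J : 'M[R]_T) : Prop :=
  forall j : 'rV[R]_T, (j <= J)%MS ->
    exists (j' : 'rV[R]_T) (u : 'cV[R]_m),
      (j' <= J)%MS /\
      Rdat *m j^T = Qdat *m Pdat *m j'^T + Qdat *m B *m u /\
      Cm *m Pdat *m j^T = D *m u.

Definition is_Jstar (J : 'M[R]_T) : Prop :=
  weakly_unobs_coeff J /\
  forall J' : 'M[R]_T, weakly_unobs_coeff J' -> (J' <= J)%MS.

(* S_+ = J^perp cap im(X_+^T) *)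
Definition Splus_cap (J : 'M[R]_T) : 'M[R]_T := (perp J :&: Xp)%MS.

Definition Sigma : set 'M[R]_n := [set A | Xp - B *m Um = A *m Xm].

Definition d_unobs (A : 'M[R]_n) : \bar R :=
  ereal_inf [set (sigma_min (col_mx (lam%:M - toC A) (toC Cm)))%:E
            | lam in [set: C]].

Definition d_unobs_Sigma : \bar R := ereal_inf [set d_unobs A | A in Sigma].

Definition in_F (J : 'M[R]_T) (v : 'rV[R]_T) : Prop :=
  (v <= perp J)%MS /\ Cm *m Xm *m v^T = 0 /\ v != 0 /\
  ~ (exists j : 'rV[R]_T, (j <= J)%MS /\ Xp *m v^T = Xp *m j^T).

Definition zeta (J : 'M[R]_T) (v : 'rV[R]_T) : 'rV[R]_T :=
  (nrm2 (proj (Splus_cap J) v))^-1 *: proj (Splus_cap J) v.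

Definition DeltaXp (J : 'M[R]_T) (lam : C) (v : 'rV[R]_T) : 'M[C]_(n, T) :=
  ((lam *: toC Xm - toC Xp + toC (B *m Um)) *m toC v^T) *m toC (zeta J v).

Definition DeltaD (J : 'M[R]_T) (lam : C) (v : 'rV[R]_T) :
  'M[C]_(n, T) * 'M[C]_(n, T) * 'M[C]_(m, T) * 'M[C]_(p, T) :=
  (0, DeltaXp J lam v, 0, 0).

Definition fro_data
  (d : 'M[C]_(n, T) * 'M[C]_(n, T) * 'M[C]_(m, T) * 'M[C]_(p, T)) : R :=
  let: (dXm, dXp, dUm, dYm) := d in
  Num.sqrt (fro2 dXm + fro2 dXp + fro2 dUm + fro2 dYm).

End Data.
End Defs.

(* Main.v *)
Require Import Defs.
From HB Require Import structures.
From mathcomp Require Import all_boot all_order all_algebra.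
From mathcomp Require Import all_classical all_reals ereal.
From mathcomp.real_closed Require Import complex.
From mathcomp Require Import spectral sesquilinear.
From mathcomp Require Import ring lra.
Import Order.TTheory GRing.Theory Num.Theory.
Local Open Scope ring_scope.
Local Open Scope classical_set_scope.
Local Open Scope complex_scope.

Set Implicit Arguments.
Unset Strict Implicit.

Section Aux.
Variable R : realType.
Local Notation C := R[i].

Lemma sqmodE (z : C) : (sqmod z)%:C = conjc z * z.
Proof.
case: z => a b /=; apply/eqP; rewrite eq_complex /=; apply/andP; split; apply/eqP.
  by rewrite !expr2; lra.
by lra.
Qed.

Lemma sqmod_ge0 (z : C) : 0 <= sqmod z.
Proof. by case: z => a b /=; rewrite addr_ge0 // sqr_ge0. Qed.

Definition nC {k : nat} (x : 'cV[C]_k) : R := \sum_i sqmod (x i 0).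

Lemma nC_ge0 k (x : 'cV[C]_k) : 0 <= nC x.
Proof. by apply: sumr_ge0 => i _; exact: sqmod_ge0. Qed.

Lemma adjmxE k l (M : 'M[C]_(k, l)) : adjmx M = (M ^t*)%sesqui.
Proof. by []. Qed.

Lemma nCE k (x : 'cV[C]_k) : (adjmx x *m x) 0 0 = (nC x)%:C.
Proof.
rewrite /nC rmorph_sum mxE; apply: eq_bigr => i _ /=.
by rewrite -[RHS]/((sqmod (x i 0))%:C) sqmodE !mxE.
Qed.

Lemma adjmxM k l q (A : 'M[C]_(k, l)) (B : 'M[C]_(l, q)) :
  adjmx (A *m B) = adjmx B *m adjmx A.
Proof. by rewrite !adjmxE trmx_mul map_mxM. Qed.

Lemma adjmxK k l (A : 'M[C]_(k, l)) : adjmx (adjmx A) = A.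
Proof. by rewrite !adjmxE trmxCK. Qed.


Definition dg {l : nat} (r : 'I_l -> R) : 'M[C]_l := diag_mx (\row_i (r i)%:C).

Lemma spec k l (M : 'M[C]_(k, l)) : exists (P : 'M[C]_l) (r : 'I_l -> R),
  [/\ adjmx P *m P = 1%:M, (forall i, 0 <= r i),
      (forall i, min_eig (adjmx M *m M) <= r i) &
      adjmx M *m M = adjmx P *m dg r *m P].
Proof.
set G := adjmx M *m M.
have GA : adjmx G = G by rewrite /G adjmxM adjmxK.
have Gn : G \is normalmx by apply/normalmxP; rewrite -adjmxE GA.
set P := spectralmx G; set d := spectral_diag G.
have PU : P \is unitarymx := spectral_unitarymx G.
have PPa : P *m adjmx P = 1%:M by apply/unitarymxP.
have PaP : adjmx P *m P = 1%:M.
  by rewrite adjmxE -invmx_unitary // mulVmx // spectral_unit.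
have GE : G = adjmx P *m diag_mx d *m P.
  by rewrite adjmxE -invmx_unitary //; exact/orthomx_spectralP.
have DE : diag_mx d = P *m G *m adjmx P.
  by rewrite GE !mulmxA PPa mul1mx -mulmxA PPa mulmx1.
have PG : P *m G = diag_mx d *m P.
  by rewrite DE -!mulmxA PaP mulmx1.
set N := M *m adjmx P.
have dE i : d 0 i = (nC (col i N))%:C.
  rewrite -nCE.
  have : diag_mx d i i = (P *m G *m adjmx P) i i by rewrite DE.
  rewrite mxE eqxx mulr1n => ->.
  have -> : P *m G *m adjmx P = adjmx N *m N.
    by rewrite /N adjmxM adjmxK /G !mulmxA.
  rewrite !mxE; apply: eq_bigr => j _; rewrite !mxE.
  done.
have Peig i : eigenvalue G (d 0 i).
  apply/eigenvalueP; exists (row i P).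
    by rewrite -row_mul PG mul_diag_mx; apply/rowP => j; rewrite !mxE.
  apply/negP => /eqP Hr.
  have : row i (P *m adjmx P) = row i 1%:M by rewrite PPa.
  rewrite row_mul Hr mul0mx => /rowP /(_ i); rewrite !mxE eqxx /=.
  by move/eqP; rewrite eq_sym oner_eq0.
have lb : has_lbound [set y : R | eigenvalue G y%:C].
  exists 0 => y /eigenvalueP [v vG v0].
  set w := v *m adjmx P.
  have w0 : w != 0.
    apply: contra v0 => /eqP w0.
    by rewrite -[v]mulmx1 -PaP mulmxA -/w w0 mul0mx.
  have wD : w *m diag_mx d = y%:C *: w.
    rewrite /w DE !mulmxA -[v *m _ *m P]mulmxA PaP mulmx1.
    by rewrite -[v *m _ *m M]mulmxA -/G vG scalemxAl.
  have [j wj] : exists j, w 0 j != 0.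
    case: (pickP (fun j => w 0 j != 0)) => [j wj|H]; first by exists j.
    case/negP: w0; apply/eqP/rowP => j; move/negbFE/eqP: (H j) => ->; by rewrite mxE.
  have := congr1 (fun A : 'rV[C]_l => A 0 j) wD.
  move: wj; rewrite /= mul_mx_diag !mxE mulrC => wj /(mulIf wj).
  rewrite dE => /complexI <-; exact: nC_ge0.
exists P, (fun i => nC (col i N)); split => //.
- by move=> i; exact: nC_ge0.
- by move=> i; apply: (ge_inf lb); rewrite /= -dE; exact: Peig.
rewrite -/G {1}GE; congr (_ *m _ *m _); congr diag_mx; apply/rowP => i.
by rewrite mxE dE.
Qed.

Lemma qf_dg l (P : 'M[C]_l) (r : 'I_l -> R) (z : 'cV[C]_l) :
  (adjmx z *m (adjmx P *m dg r *m P) *m z) 0 0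
  = (\sum_i r i * sqmod ((P *m z) i 0))%:C.
Proof.
have -> : adjmx z *m (adjmx P *m dg r *m P) *m z
            = adjmx (P *m z) *m dg r *m (P *m z).
  by rewrite adjmxM !mulmxA.
rewrite rmorph_sum mxE; apply: eq_bigr => i _.
rewrite mul_mx_diag mxE rmorphM /= sqmodE !mxE.
by rewrite mulrCA mulrA.
Qed.

Lemma nC_unit l (P : 'M[C]_l) (z : 'cV[C]_l) :
  adjmx P *m P = 1%:M -> nC z = \sum_i sqmod ((P *m z) i 0).
Proof.
move=> PaP; apply: complexI; rewrite -nCE rmorph_sum.
have -> : adjmx z *m z = adjmx (P *m z) *m (P *m z).
  by rewrite adjmxM -mulmxA [adjmx P *m _]mulmxA PaP mul1mx.
rewrite mxE; apply: eq_bigr => i _; rewrite /= sqmodE !mxE //.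
Qed.

Lemma rayleigh k l (M : 'M[C]_(k, l)) (x : 'cV[C]_l) :
  min_eig (adjmx M *m M) * nC x <= nC (M *m x).
Proof.
have [P [r [PaP r0 mur GE]]] := spec M.
have -> : nC (M *m x) = \sum_i r i * sqmod ((P *m x) i 0).
  apply: complexI; rewrite -nCE -qf_dg -GE adjmxM !mulmxA //.
rewrite (nC_unit x PaP) mulr_sumr; apply: ler_sum => i _.
by apply: ler_wpM2r; [exact: sqmod_ge0 | exact: mur].
Qed.

Lemma rayleigh2 k l (M : 'M[C]_(k, l)) (x : 'cV[C]_l) :
  min_eig (adjmx M *m M) * nC (M *m x) <= nC (adjmx M *m M *m x).
Proof.
have [P [r [PaP r0 mur GE]]] := spec M.
have -> : nC (M *m x) = \sum_i r i * sqmod ((P *m x) i 0).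
  apply: complexI; rewrite -nCE -qf_dg -GE adjmxM !mulmxA //.
have GG : (adjmx M *m M) *m (adjmx M *m M) = adjmx P *m dg (fun i => r i ^+ 2) *m P.
  rewrite GE -!mulmxA; congr (_ *m _); rewrite !mulmxA -[_ *m P *m adjmx P]mulmxA.
  rewrite (mulmx1C PaP) mulmx1 /dg mulmx_diag; congr (diag_mx _ *m _); apply/rowP => i.
  by rewrite !mxE rmorphXn.
have -> : nC (adjmx M *m M *m x) = \sum_i r i ^+ 2 * sqmod ((P *m x) i 0).
  apply: complexI; rewrite -nCE -qf_dg -GG adjmxM.
  rewrite [adjmx (_ *m M)]adjmxM adjmxK !mulmxA //.
rewrite mulr_sumr; apply: ler_sum => i _; rewrite mulrA.
apply: ler_wpM2r; first exact: sqmod_ge0.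
by rewrite expr2; apply: ler_wpM2r; [exact: r0 | exact: mur].
Qed.


Lemma perp_anti k1 k2 T (Y : 'M[R]_(k1, T)) (Z : 'M[R]_(k2, T)) :
  (Y <= Z)%MS -> (kermx Z^T <= kermx Y^T)%MS.
Proof.
move/submxP => [D ->]; rewrite sub_kermx trmx_mul mulmxA.
by rewrite mulmx_ker mul0mx.
Qed.

Lemma biperp k T (X : 'M[R]_(k, T)) : (kermx (kermx X^T)^T <= X)%MS.
Proof.
have sX : (X <= kermx (kermx X^T)^T)%MS.
  by rewrite sub_kermx -[X in X *m _]trmxK -trmx_mul mulmx_ker trmx0.
have := mxrank_leqif_sup sX; case=> _ <-.
rewrite !mxrank_ker !mxrank_tr mxrank_ker mxrank_tr subKn //.
exact: rank_leq_col.
Qed.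

Definition q {k : nat} (y : 'rV[R]_k) : R := (y *m y^T) 0 0.

Lemma qE k (y : 'rV[R]_k) : q y = nrm2 y.
Proof. by rewrite /q /nrm2 mxE; apply: eq_bigr => i _; rewrite mxE expr2. Qed.

Lemma nrm2_ge0 k (y : 'rV[R]_k) : 0 <= nrm2 y.
Proof. by apply: sumr_ge0 => i _; exact: sqr_ge0. Qed.

Lemma nrm2_eq0 k (y : 'rV[R]_k) : nrm2 y = 0 -> y = 0.
Proof.
move=> /eqP; rewrite /nrm2 psumr_eq0 => [/allP H|i _]; last exact: sqr_ge0.
apply/rowP => j; rewrite mxE; have := H j (mem_index_enum _).
by rewrite /= sqrf_eq0 => /eqP.
Qed.

Lemma gram_unit k T (Bs : 'M[R]_(k, T)) : row_free Bs -> Bs *m Bs^T \in unitmx.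
Proof.
move=> fB; rewrite -row_free_unit -kermx_eq0; apply/eqP.
set K := kermx _; apply/row_matrixP => i; rewrite row0.
have Ki : row i K *m (Bs *m Bs^T) = 0 by rewrite -row_mul mulmx_ker row0.
have : row i K *m Bs = 0.
  apply: nrm2_eq0; rewrite -qE /q trmx_mul !mulmxA -[row i K *m Bs *m Bs^T]mulmxA Ki mul0mx mxE /=.
  done.
by move/eqP; rewrite mulmx_free_eq0 // => /eqP.
Qed.


Lemma proj_props k T (S : 'M[R]_(k, T)) (v : 'rV[R]_T) :
  nrm2 (Defs.proj S v) <= nrm2 v /\ (Defs.proj S v = 0 -> (v <= kermx S^T)%MS).
Proof.
have fB := row_base_free S.
have sSB : (S <= row_base S)%MS by rewrite eq_row_base.
have PE0 : Defs.proj S v = v *m ((row_base S)^T *m invmx (row_base S *m (row_base S)^T) *m row_base S) by [].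
move: PE0 fB sSB; move: (row_base S) => Bs PE0 fB sSB.
set G := Bs *m Bs^T.
have Gu : G \in unitmx by apply: gram_unit.
have GT : G^T = G by rewrite /G trmx_mul trmxK.
set Pi := Bs^T *m invmx G *m Bs.
have PE : Defs.proj S v = v *m Pi by [].
have PiT : Pi^T = Pi by rewrite /Pi !trmx_mul trmxK trmx_inv GT mulmxA.
have PiPi : Pi *m Pi = Pi.
  rewrite /Pi !mulmxA -[Bs^T *m invmx G *m Bs *m Bs^T]mulmxA -/G.
  by rewrite -[Bs^T *m invmx G *m G]mulmxA mulVmx // mulmx1.
have part2 : Defs.proj S v = 0 -> (v <= kermx S^T)%MS.
  move=> P0.
  apply: submx_trans (perp_anti sSB); rewrite sub_kermx.
  have : v *m Pi *m Bs^T = 0 by rewrite -PE P0 mul0mx.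
  rewrite /Pi !mulmxA -[v *m Bs^T *m invmx G *m Bs *m Bs^T]mulmxA -/G.
  by rewrite -mulmxA mulVmx // mulmx1 => ->.
split => //.
clearbody Pi.
rewrite -!qE PE /q.
set p := v *m Pi; set e := v - p.
have pe : p *m e^T = 0.
  rewrite /e /p linearB /= trmx_mul PiT mulmxBr.
  by rewrite mulmxA -(mulmxA v Pi Pi) PiPi subrr.
have ep : e *m p^T = 0 by rewrite -[e *m _]trmxK trmx_mul trmxK pe trmx0.
have -> : v = p + e by rewrite /e addrC subrK.
rewrite linearD /= mulmxDl !mulmxDr pe ep addr0 add0r.
clearbody e; rewrite [X in _ <= X]mxE lerDl mxE; apply: sumr_ge0 => j _; rewrite mxE -expr2; exact: sqr_ge0.
Qed.


Lemma toCE k l (A : 'M[R]_(k, l)) : toC A = map_mx (real_complex R) A.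
Proof. by []. Qed.

Lemma toCM k l r (A : 'M[R]_(k, l)) (B : 'M[R]_(l, r)) :
  toC (A *m B) = toC A *m toC B.
Proof. by rewrite !toCE map_mxM. Qed.

Lemma toCB k l (A B : 'M[R]_(k, l)) : toC (A - B) = toC A - toC B.
Proof. by rewrite !toCE map_mxB. Qed.

Lemma toC0 k l : toC (0 : 'M[R]_(k, l)) = 0.
Proof. by rewrite toCE map_mx0. Qed.

Lemma toCT k l (A : 'M[R]_(k, l)) : toC A^T = (toC A)^T.
Proof. by rewrite !toCE map_trmx. Qed.

Lemma adjmx_toC k l (A : 'M[R]_(k, l)) : adjmx (toC A) = toC A^T.
Proof. by apply/matrixP => i j; rewrite !mxE conjc_real. Qed.

Lemma sqmodR (x : R) : sqmod x%:C = x ^+ 2.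
Proof. by rewrite /= expr0n /= addr0. Qed.

Lemma nC_toC k (c : 'cV[R]_k) : nC (toC c) = nrm2 c^T.
Proof. by apply: eq_bigr => i _; rewrite !mxE sqmodR. Qed.

Lemma sqrt_bound (mu N Y : R) : mu * N <= Y -> 0 <= Y -> Num.sqrt mu ^+ 2 * N <= Y.
Proof.
move=> h Y0; case: (leP 0 mu) => hm.
  by rewrite sqr_sqrtr.
by rewrite ler0_sqrtr ?(ltW hm) // expr0n /= mul0r.
Qed.

Lemma sig2_bound k T (X : 'M[R]_(k, T)) (v : 'rV[R]_T) : (v <= X)%MS ->
  sigma_min (toC X) ^+ 2 * nrm2 v <= nC (toC (X *m v^T)).
Proof.
move=> vX; rewrite /sigma_min; case: leqP => hTk.
  apply: sqrt_bound; last exact: nC_ge0.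
  have := rayleigh (toC X) (toC v^T).
  by rewrite nC_toC trmxK toCM.
have [u ->] := submxP vX.
apply: sqrt_bound; last exact: nC_ge0.
set M := toC X; set K := adjmx M.
have -> : M *m adjmx M = adjmx K *m K by rewrite /K adjmxK.
have := rayleigh2 K (toC u^T).
rewrite /K /M adjmx_toC -toCM -trmx_mul nC_toC trmxK.
by rewrite adjmx_toC trmxK -mulmxA -!toCM trmx_mul.
Qed.


Lemma nC_col k1 k2 (a : 'cV[C]_k1) (b : 'cV[C]_k2) :
  nC (col_mx a b) = nC a + nC b.
Proof.
rewrite /nC big_split_ord /=; congr (_ + _); apply: eq_bigr => i _.
  by rewrite col_mxEu.
by rewrite col_mxEd.
Qed.

Lemma nC0 k : nC (0 : 'cV[C]_k) = 0.
Proof. by rewrite /nC big1 // => i _; rewrite mxE /= expr0n /= addr0. Qed.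

Lemma sig1_bound k r (A : 'M[R]_k) (Cm : 'M[R]_(r, k)) (lam : C) (w : 'cV[R]_k) :
  Cm *m w = 0 ->
  sigma_min (col_mx (lam%:M - toC A) (toC Cm)) ^+ 2 * nC (toC w)
  <= nC ((lam%:M - toC A) *m toC w).
Proof.
move=> Cw; rewrite /sigma_min leq_addr.
apply: sqrt_bound; last exact: nC_ge0.
have := rayleigh (col_mx (lam%:M - toC A) (toC Cm)) (toC w).
by rewrite mul_col_mx -toCM Cw toC0 nC_col nC0 addr0.
Qed.

Lemma sqmodMR (z : C) (x : R) : sqmod (z * x%:C) = sqmod z * x ^+ 2.
Proof. by case: z => a b /=; ring. Qed.

Lemma fro2_outer k T (a : 'cV[C]_k) (z : 'rV[R]_T) :
  fro2 (a *m toC z) = nC a * nrm2 z.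
Proof.
rewrite /fro2 /nC mulr_suml; apply: eq_bigr => i _.
rewrite /nrm2 mulr_sumr; apply: eq_bigr => j _.
by rewrite mxE big_ord1 mxE sqmodMR.
Qed.

Lemma fro20 k l : fro2 (0 : 'M[C]_(k, l)) = 0.
Proof.
rewrite /fro2 big1 // => i _; rewrite big1 // => j _.
by rewrite mxE /= expr0n /= addr0.
Qed.

Lemma nrm2Z k (c : R) (z : 'rV[R]_k) : nrm2 (c *: z) = c ^+ 2 * nrm2 z.
Proof.
by rewrite /nrm2 mulr_sumr; apply: eq_bigr => j _; rewrite mxE exprMn.
Qed.

End Aux.

Theorem theorem2 (R : realType) (n m p T : nat)
  (hn : (0 < n)%N) (hm : (0 < m)%N) (hp : (0 < p)%N) (hT : (0 < T)%N)
  (B : 'M[R]_(n, m)) (Cm : 'M[R]_(p, n)) (D : 'M[R]_(p, m))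
  (Xm Xp : 'M[R]_(n, T)) (Um : 'M[R]_(m, T)) (Ym : 'M[R]_(p, T))
  (hSigma : Sigma B Xm Xp Um !=set0)
  (Jstar : 'M[R]_T) (hJ : is_Jstar B Cm D Xm Xp Um Jstar) :
  (d_unobs_Sigma B Cm Xm Xp Um * (sigma_min (toC Xm))%:E <=
   ereal_inf [set e | exists (lam : R[i]) (v : 'rV[R]_T),
                 in_F Cm Xm Xp Jstar v /\
                 e = (fro_data (DeltaD p B Xm Xp Um Jstar lam v))%:E])%E.
Proof.
apply/ereal_infP => _ [lam [v [[vperp [Cv0 [v0 vnot]]] ->]]].
have [A hA] := hSigma.
have hA' : Xp - B *m Um = A *m Xm := hA.
case: hJ => hW hMax.
set s1 := sigma_min (col_mx (lam%:M - toC A) (toC Cm)).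
set s2 := sigma_min (toC Xm).
have s1ge : 0 <= s1 by rewrite /s1 /sigma_min; case: ifP => _; exact: sqrtr_ge0.
have s2ge : 0 <= s2 by rewrite /s2 /sigma_min; case: ifP => _; exact: sqrtr_ge0.
have dle : (d_unobs_Sigma B Cm Xm Xp Um <= s1%:E)%E.
  apply: le_trans (_ : (d_unobs Cm A <= _)%E).
    by apply: ereal_inf_lbound; exists A.
  by apply: ereal_inf_lbound; exists lam.
apply: le_trans (lee_wpmul2r _ dle) _; first by rewrite lee_fin.
rewrite -EFinM lee_fin.
set K0 := kermx Xm^T.
have K0X : forall k : 'rV[R]_T, (k <= K0)%MS -> Xm *m k^T = 0.
  move=> k; rewrite sub_kermx => /eqP kX.
  by rewrite -[Xm]trmxK -trmx_mul kX trmx0.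
have K0J : (K0 <= Jstar)%MS.
  apply: (submx_trans (addsmxSr Jstar K0)); apply: hMax.
  move=> j /sub_addsmxP [[u1 u2] /= ->].
  have [j' [u [sj' [e1 e2]]]] := hW (u1 *m Jstar) (submxMl _ _).
  have kX := K0X (u2 *m K0) (submxMl _ _).
  exists j', u; split; first exact: submx_trans sj' (addsmxSl _ _).
  move: e1 e2; rewrite /Rdat /Pdat /Qdat !mul1mx => e1 e2.
  rewrite linearD /= !mulmxDr -e1 -e2 hA' -!mulmxA kX !mulmx0 !addr0.
  by split.
have vX : (v <= Xm)%MS.
  apply: submx_trans vperp _; apply: submx_trans (perp_anti K0J) _.
  exact: biperp.
set S := Splus_cap Xp Jstar.
set pv := Defs.proj S v.
have [pvle pv0] := proj_props S v.
have pvn0 : pv != 0.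
  apply/eqP => /pv0 vS.
  set K1 := kermx Xp^T.
  set Y := (Jstar + K1)%MS.
  have YS : (kermx Y^T <= S)%MS.
    rewrite sub_capmx; apply/andP; split.
      exact: perp_anti (addsmxSl _ _).
    apply: submx_trans (perp_anti (addsmxSr Jstar K1)) _.
    exact: biperp.
  have vY : (v <= Y)%MS.
    by apply: submx_trans vS _; apply: submx_trans (perp_anti YS) _; exact: biperp.
  move/sub_addsmxP: vY => [[a b] /= vE].
  apply: vnot; exists (a *m Jstar); split; first exact: submxMl.
  have : b *m K1 *m Xp^T = 0 by rewrite -mulmxA mulmx_ker mulmx0.
  move=> bK; rewrite vE linearD /= mulmxDr.
  by rewrite -[Xp in Xp *m (b *m K1)^T]trmxK -trmx_mul bK trmx0 addr0.
have P0 : 0 < nrm2 pv.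
  rewrite lt_def nrm2_ge0 andbT; apply/eqP => /nrm2_eq0 /eqP.
  by apply/negP.
set w := Xm *m v^T.
set a := (lam%:M - toC A) *m toC w.
have DX : DeltaXp B Xm Xp Um Jstar lam v = a *m toC (zeta Xp Jstar v).
  rewrite /DeltaXp /a /w [toC (Xm *m _)]toCM mulmxA; congr (_ *m _ *m _).
    have e : - toC Xp + toC (B *m Um) = - toC (Xp - B *m Um) :> 'M[R[i]]_(n, T).
    by rewrite toCB opprB addrC.
  by rewrite -addrA e hA' toCM mulmxBl mul_scalar_mx.
have fE : fro_data (DeltaD p B Xm Xp Um Jstar lam v) = Num.sqrt (nC a / nrm2 pv).
  rewrite /fro_data /DeltaD /= DX fro2_outer !fro20 add0r !addr0.
  rewrite /zeta -/S -/pv nrm2Z; congr (Num.sqrt (_ * _)).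
  by rewrite expr2 -mulrA mulVf ?gt_eqF // mulr1.
have h1 : s1 ^+ 2 * nC (toC w) <= nC a.
  by apply: sig1_bound; rewrite /w mulmxA.
have h2 : s2 ^+ 2 * nrm2 v <= nC (toC w) by exact: sig2_bound.
rewrite fE -(ger0_norm (mulr_ge0 s1ge s2ge)) -sqrtr_sqr; apply: ler_wsqrtr.
rewrite ler_pdivlMr // exprMn -mulrA.
apply: le_trans h1; apply: ler_wpM2l; first exact: sqr_ge0.
apply: le_trans h2; apply: ler_wpM2l; first exact: sqr_ge0.
exact: pvle.
Qed.
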